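(* If $G$ is a subgroup of $PL_o(I)$ of depth $n$ for some positive integer $n$, then the derived subgroup $G'$ is a subgroup of $PL_o(I)$ of depth $n-1$.
   Context: $PL_o(I)$ is the group of orientation-preserving piecewise-linear homeomorphisms of $I=[0,1]$ with finitely many breaks in slope, acting on the right. An orbital of $g$ is a connected component of the set of points moved by $g$. A signed orbital of $G$ is a pair $(A,g)$ with $g\in G$ and $A$ an orbital of $g$. A tower of $G$ is a set of signed orbitals of $G$ with pairwise distinct orbitals which are pairwise comparable under inclusion; its height is its cardinality, and the depth of $G$ is the supremum of the heights of towers of $G$. *)

(* Defs.v *)
From Stdlib Require Import Reals List.
Open Scope R_scope.

(* Elements of PL_o(I) are represented as functions R -> R which are the
   identity outside I = [0,1] (so that group equality is function equality). *)
Definition PLo (f : R -> R) : Prop :=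
  (forall x, (x < 0 \/ 1 < x) -> f x = x) /\
  (forall x, 0 <= x <= 1 -> 0 <= f x <= 1) /\
  (forall y, 0 <= y <= 1 -> exists x, 0 <= x <= 1 /\ f x = y) /\
  (forall x y, 0 <= x -> x < y -> y <= 1 -> f x < f y) /\
  (* piecewise linear with finitely many breaks: affine on each
     [p i, p (i+1)] for a finite subdivision 0 = p 0 < ... < p n = 1
     (this also yields continuity) *)
  (exists (n : nat) (p a b : nat -> R),
      p 0%nat = 0 /\ p n = 1 /\
      (forall i, (i < n)%nat -> p i < p (S i)) /\
      (forall i x, (i < n)%nat -> p i <= x <= p (S i) -> f x = a i * x + b i)).

Definition is_PL_subgroup (G : (R -> R) -> Prop) : Prop :=
  (forall f, G f -> PLo f) /\
  G (fun x => x) /\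
  (forall f g, G f -> G g -> G (fun x => g (f x))) /\
  (forall f, G f -> exists h, G h /\ forall x, h (f x) = x /\ f (h x) = x).

(* Derived subgroup: generated by commutators f^-1 g^-1 f g (right action:
   apply f^-1 first). Inverses of commutators are commutators, so products
   of commutators (plus the identity) form the generated subgroup. *)
Inductive derived (G : (R -> R) -> Prop) : (R -> R) -> Prop :=
  | derived_id : derived G (fun x => x)
  | derived_comm : forall f g fi gi,
      G f -> G g -> G fi -> G gi ->
      (forall x, fi (f x) = x /\ f (fi x) = x) ->
      (forall x, gi (g x) = x /\ g (gi x) = x) ->
      derived G (fun x => g (f (gi (fi x))))
  | derived_mul : forall f g, derived G f -> derived G g ->
      derived G (fun x => g (f x)).

Definition moved (g : R -> R) (x : R) : Prop := 0 <= x <= 1 /\ g x <> x.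

Definition set_incl (A B : R -> Prop) : Prop := forall x, A x -> B x.
Definition set_eq (A B : R -> Prop) : Prop := forall x, A x <-> B x.

(* Connected subsets of R are exactly the intervals. *)
Definition connected_set (A : R -> Prop) : Prop :=
  forall x y z, A x -> A y -> x <= z <= y -> A z.

Definition orbital (g : R -> R) (A : R -> Prop) : Prop :=
  (exists x, A x) /\ set_incl A (moved g) /\ connected_set A /\
  (forall B, set_incl A B -> set_incl B (moved g) -> connected_set B ->
     set_eq A B).

Definition tower (G : (R -> R) -> Prop) (t : list ((R -> Prop) * (R -> R)))
  : Prop :=
  (forall Ag, In Ag t -> G (snd Ag) /\ orbital (snd Ag) (fst Ag)) /\
  (forall i j, (i < length t)%nat -> (j < length t)%nat -> i <> j ->
     let A := fst (nth i t (fun _ => False, fun x => x)) in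
     let B := fst (nth j t (fun _ => False, fun x => x)) in
     ~ set_eq A B /\ (set_incl A B \/ set_incl B A)).

Definition has_tower_of_height (G : (R -> R) -> Prop) (k : nat) : Prop :=
  exists t, tower G t /\ length t = k.

(* depth G = n (n finite): some tower has height n and none has height n+1
   (hence, since subsets of towers are towers, every tower, finite or
   infinite, has at most n elements). *)
Definition depth_eq (G : (R -> R) -> Prop) (n : nat) : Prop :=
  has_tower_of_height G n /\ ~ has_tower_of_height G (S n).

(* Main.v *)
Require Import Defs.
From Stdlib Require Import Reals List.
From Stdlib Require Import Lra Lia Classical Psatz.
Open Scope R_scope.

Section Basic.

Lemma PLo_out f x : PLo f -> (x < 0 \/ 1 < x) -> f x = x.
Proof. intros [H _]; apply H. Qed.

Lemma PLo_range f x : PLo f -> 0 <= x <= 1 -> 0 <= f x <= 1.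
Proof. intros [_ [H _]]; apply H. Qed.

Lemma PLo_lt f x y : PLo f -> 0 <= x -> x < y -> y <= 1 -> f x < f y.
Proof. intros [_ [_ [_ [H _]]]]; apply H. Qed.

Lemma PLo_le f x y : PLo f -> 0 <= x -> x <= y -> y <= 1 -> f x <= f y.
Proof.
  intros Hf H1 H2 H3. destruct (Req_dec x y) as [->|Hne]; [lra|].
  left; apply PLo_lt; auto; lra.
Qed.

Lemma PLo_lt_rev f x y : PLo f -> 0 <= x <= 1 -> 0 <= y <= 1 -> f x < f y -> x < y.
Proof.
  intros Hf Hx Hy H. destruct (Rlt_le_dec x y) as [|Hle]; auto.
  pose proof (PLo_le f y x Hf ltac:(lra) Hle ltac:(lra)). lra.
Qed.

Lemma PLo_range_rev f x : PLo f -> 0 <= f x <= 1 -> 0 <= x <= 1.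
Proof.
  intros Hf H. destruct (Rlt_le_dec x 0).
  - rewrite (PLo_out f x Hf) in H; lra.
  - destruct (Rle_lt_dec x 1); [lra|]. rewrite (PLo_out f x Hf) in H; lra.
Qed.

Lemma PLo_0 f : PLo f -> f 0 = 0.
Proof.
  intros Hf. destruct Hf as [H1 [H2 [H3 [H4 H5]]]] eqn:E.
  destruct (H3 0 ltac:(lra)) as [x [Hx Hfx]].
  destruct (Req_dec x 0) as [->|Hne]; auto.
  pose proof (H4 0 x ltac:(lra) ltac:(lra) ltac:(lra)).
  pose proof (H2 0 ltac:(lra)). lra.
Qed.

Lemma PLo_1 f : PLo f -> f 1 = 1.
Proof.
  intros Hf. destruct Hf as [H1 [H2 [H3 [H4 H5]]]] eqn:E.
  destruct (H3 1 ltac:(lra)) as [x [Hx Hfx]].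
  destruct (Req_dec x 1) as [->|Hne]; auto.
  pose proof (H4 x 1 ltac:(lra) ltac:(lra) ltac:(lra)).
  pose proof (H2 1 ltac:(lra)). lra.
Qed.

Lemma find_piece_r (q : nat -> R) p : forall m, q 0%nat <= p -> p < q m ->
  exists i, (i < m)%nat /\ q i <= p < q (S i).
Proof.
  induction m; intros H0 H1. - lra.
  - destruct (Rlt_le_dec p (q m)) as [Hl|Hl].
    + destruct (IHm H0 Hl) as [i [Hi Hi2]]. exists i; split; auto; lia.
    + exists m; split; auto; lra.
Qed.

Lemma find_piece_l (q : nat -> R) p : forall m, q 0%nat < p -> p <= q m ->
  exists i, (i < m)%nat /\ q i < p <= q (S i).
Proof.
  induction m; intros H0 H1. - lra.
  - destruct (Rle_lt_dec p (q m)) as [Hl|Hl].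
    + destruct (IHm H0 Hl) as [i [Hi Hi2]]. exists i; split; auto; lia.
    + exists m; split; auto; lra.
Qed.

Lemma PLo_RA f p : PLo f -> 0 <= p < 1 ->
  exists e a b, 0 < e /\ p + e <= 1 /\ forall y, p <= y <= p + e -> f y = a * y + b.
Proof.
  intros Hf Hp. destruct Hf as [_ [_ [_ [_ [N [pp [a [b [H0 [HN [Hinc Haff]]]]]]]]]]].
  destruct (find_piece_r pp p N ltac:(lra) ltac:(lra)) as [i [Hi Hpi]].
  exists (Rmin (pp (S i) - p) (1 - p)), (a i), (b i).
  assert (Rmin (pp (S i) - p) (1 - p) <= pp (S i) - p) by apply Rmin_l.
  assert (Rmin (pp (S i) - p) (1 - p) <= 1 - p) by apply Rmin_r.
  repeat split.
  - apply Rmin_glb_lt; lra.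
  - lra.
  - intros y Hy. apply Haff; auto; lra.
Qed.

Lemma PLo_LA f p : PLo f -> 0 < p <= 1 ->
  exists e a b, 0 < e /\ 0 <= p - e /\ forall y, p - e <= y <= p -> f y = a * y + b.
Proof.
  intros Hf Hp. destruct Hf as [_ [_ [_ [_ [N [pp [a [b [H0 [HN [Hinc Haff]]]]]]]]]]].
  destruct (find_piece_l pp p N ltac:(lra) ltac:(lra)) as [i [Hi Hpi]].
  exists (Rmin (p - pp i) p), (a i), (b i).
  assert (Rmin (p - pp i) p <= p - pp i) by apply Rmin_l.
  assert (Rmin (p - pp i) p <= p) by apply Rmin_r.
  repeat split.
  - apply Rmin_glb_lt; lra.
  - lra.
  - intros y Hy. apply Haff; auto; lra.
Qed.

Lemma lin_nbhd u v p : u * p + v <> 0 ->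
  exists d, 0 < d /\ forall y, p - d <= y <= p + d -> u * y + v <> 0.
Proof.
  intros H. destruct (Req_dec u 0) as [Hu|Hu].
  - exists 1; split; [lra|]. intros y _. subst u. lra.
  - exists (Rabs (u * p + v) / (2 * Rabs u)).
    assert (Hau : 0 < Rabs u) by (apply Rabs_pos_lt; auto).
    assert (Hap : 0 < Rabs (u * p + v)) by (apply Rabs_pos_lt; auto).
    split. { apply Rdiv_lt_0_compat; lra. }
    intros y Hy Hz.
    assert (E : u * p + v = u * (p - y)) by lra.
    assert (Hpy : Rabs (p - y) <= Rabs (u * p + v) / (2 * Rabs u)).
    { apply Rabs_le; lra. }
    assert (Rabs (u * p + v) = Rabs u * Rabs (p - y)) by (rewrite E; apply Rabs_mult).
    assert (Rabs u * Rabs (p - y) <= Rabs u * (Rabs (u * p + v) / (2 * Rabs u))).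
    { apply Rmult_le_compat_l; lra. }
    assert (Rabs u * (Rabs (u * p + v) / (2 * Rabs u)) = Rabs (u * p + v) / 2) by (field; lra).
    lra.
Qed.

Lemma moved_nbhd f p : PLo f -> 0 <= p <= 1 -> f p <> p ->
  exists d, 0 < d /\ forall y, 0 <= y <= 1 -> p - d <= y <= p + d -> f y <> y.
Proof.
  intros Hf Hp Hne.
  assert (p <> 0) by (intros ->; rewrite PLo_0 in Hne; auto).
  assert (p <> 1) by (intros ->; rewrite PLo_1 in Hne; auto).
  destruct (PLo_RA f p Hf ltac:(lra)) as [e1 [a1 [b1 [He1 [He1' Hf1]]]]].
  destruct (PLo_LA f p Hf ltac:(lra)) as [e2 [a2 [b2 [He2 [He2' Hf2]]]]].
  destruct (lin_nbhd (a1 - 1) b1 p) as [d1 [Hd1 Hl1]].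
  { rewrite (Hf1 p) in Hne by lra. lra. }
  destruct (lin_nbhd (a2 - 1) b2 p) as [d2 [Hd2 Hl2]].
  { rewrite (Hf2 p) in Hne by lra. lra. }
  exists (Rmin (Rmin e1 d1) (Rmin e2 d2)).
  pose proof (Rmin_l (Rmin e1 d1) (Rmin e2 d2)). pose proof (Rmin_r (Rmin e1 d1) (Rmin e2 d2)).
  pose proof (Rmin_l e1 d1). pose proof (Rmin_r e1 d1). pose proof (Rmin_l e2 d2). pose proof (Rmin_r e2 d2).
  split. { repeat apply Rmin_glb_lt; lra. }
  intros y Hy Hy2 Hfy. destruct (Rle_lt_dec p y).
  - rewrite Hf1 in Hfy by lra. apply (Hl1 y); lra.
  - rewrite Hf2 in Hfy by lra. apply (Hl2 y); lra.
Qed.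

End Basic.

Lemma has_sup (E : R -> Prop) : (exists x, E x) -> (forall x, E x -> x <= 1) ->
  exists m, (forall x, E x -> x <= m) /\ (forall e, 0 < e -> exists x, E x /\ m - e < x).
Proof.
  intros Hne Hb. destruct (completeness E) as [m [Hub Hlub]].
  - exists 1; intros x Hx; apply Hb; auto.
  - auto.
  - exists m; split; [apply Hub|].
    intros e He. apply NNPP; intro Hn.
    assert (is_upper_bound E (m - e)).
    { intros x Hx. destruct (Rle_lt_dec x (m - e)); auto. exfalso; apply Hn; exists x; auto. }
    specialize (Hlub _ H). lra.
Qed.

Lemma has_inf (E : R -> Prop) : (exists x, E x) -> (forall x, E x -> 0 <= x) ->
  exists m, (forall x, E x -> m <= x) /\ (forall e, 0 < e -> exists x, E x /\ x < m + e).
Proof.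
  intros [x0 Hx0] Hb. destruct (completeness (fun y => E (- y))) as [m [Hub Hlub]].
  - exists 0; intros x Hx; specialize (Hb _ Hx); lra.
  - exists (- x0); rewrite Ropp_involutive; auto.
  - exists (- m); split.
    + intros x Hx. assert (E (- - x)) by (rewrite Ropp_involutive; auto).
      specialize (Hub _ H). lra.
    + intros e He. apply NNPP; intro Hn.
      assert (is_upper_bound (fun y => E (- y)) (m - e)).
      { intros x Hx. destruct (Rle_lt_dec x (m - e)); auto. exfalso; apply Hn; exists (-x); split; auto; lra. }
      specialize (Hlub _ H). lra.
Qed.

Lemma connected_union A B : connected_set A -> connected_set B -> (exists z, A z /\ B z) ->
  connected_set (fun y => A y \/ B y).
Proof.
  intros HA HB [z [Az Bz]] x y w [Ax|Bx] [Ay|By] Hw.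
  - left; apply (HA x y); auto.
  - destruct (Rle_lt_dec w z). + left; apply (HA x z); auto; lra. + right; apply (HB z y); auto; lra.
  - destruct (Rle_lt_dec w z). + right; apply (HB x z); auto; lra. + left; apply (HA z y); auto; lra.
  - right; apply (HB x y); auto.
Qed.

Lemma orbital_seteq f A B : orbital f A -> set_eq A B -> orbital f B.
Proof.
  intros [[z Hz] [Hm [Hc Hmax]]] He. split; [|split; [|split]].
  - exists z; apply He; auto.
  - intros x Hx; apply Hm, He; auto.
  - intros x y w Hx Hy Hw. apply He. apply (Hc x y); auto; apply He; auto.
  - intros C HBC HCm HCc x. split.
    + intro Hx; apply HBC; auto.
    + intro Hx. apply He. assert (HH : set_eq A C).
      { apply Hmax; auto. intros y Hy; apply HBC, He; auto. }
      apply HH; auto.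
Qed.

Lemma orbital_crit f a b : 0 <= a < b -> b <= 1 -> f a = a -> f b = b ->
  (forall y, a < y < b -> f y <> y) -> orbital f (fun y => a < y < b).
Proof.
  intros Hab Hb1 Ha Hb Hm. split; [|split; [|split]].
  - exists ((a + b) / 2); lra.
  - intros x Hx; split; [lra|]. apply Hm; auto.
  - intros x y w Hx Hy Hw; lra.
  - intros C HAC HCm HCc x. split; [intro Hx; apply HAC; auto|]. intro Hx.
    assert (Cm : C ((a + b) / 2)) by (apply HAC; lra).
    destruct (Rle_lt_dec x a).
    { exfalso. assert (C a) by (apply (HCc x ((a+b)/2)); auto; lra).
      destruct (HCm a H). auto. }
    destruct (Rle_lt_dec b x).
    { exfalso. assert (C b) by (apply (HCc ((a+b)/2) x); auto; lra).
      destruct (HCm b H). auto. }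
    lra.
Qed.

Definition comp (f : R -> R) (q : R) : R -> Prop :=
  fun y => exists C, connected_set C /\ set_incl C (moved f) /\ C q /\ C y.

Lemma comp_orbital f q : moved f q -> orbital f (comp f q).
Proof.
  intros Hq. split; [|split; [|split]].
  - exists q. exists (fun y => y = q). split; [|split; [|split]]; auto.
    + intros x y w -> -> Hw; lra.
    + intros x ->; auto.
  - intros x [C [_ [HC [_ Hx]]]]; apply HC; auto.
  - intros x y w [C1 [Hc1 [Hm1 [Hq1 Hx]]]] [C2 [Hc2 [Hm2 [Hq2 Hy]]]] Hw.
    destruct (Rle_lt_dec w q).
    + exists C1; split; [|split; [|split]]; auto. apply (Hc1 x q); auto; lra.
    + exists C2; split; [|split; [|split]]; auto. apply (Hc2 q y); auto; lra.
  - intros D HD HDm HDc x. split; [intro Hx; apply HD; auto|].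
    intros Hx. exists D; split; [|split; [|split]]; auto.
    apply HD. exists (fun y => y = q). split; [|split; [|split]]; auto.
    + intros u v w -> -> Hw; lra.
    + intros u ->; auto.
Qed.

Lemma comp_contains f q C : connected_set C -> set_incl C (moved f) -> C q -> set_incl C (comp f q).
Proof. intros Hc Hm Hq x Hx. exists C; auto. Qed.

Lemma orbital_interval f A : PLo f -> orbital f A ->
  exists a b, 0 <= a /\ a < b /\ b <= 1 /\ f a = a /\ f b = b /\ set_eq A (fun y => a < y < b).
Proof.
  intros Hf [[z Hz] [Hm [Hc Hmax]]].
  assert (HA01 : forall x, A x -> 0 <= x <= 1) by (intros x Hx; apply Hm; auto).
  assert (HAm : forall x, A x -> f x <> x) by (intros x Hx; apply Hm; auto).
  destruct (has_sup A) as [b [Hb1 Hb2]]. { exists z; auto. } { intros x Hx; apply HA01; auto. }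
  destruct (has_inf A) as [a [Ha1 Ha2]]. { exists z; auto. } { intros x Hx; apply HA01; auto. }
  pose proof (HA01 z Hz). pose proof (Hb1 z Hz). pose proof (Ha1 z Hz).
  assert (Hz0 : 0 < z). { destruct (Req_dec z 0) as [->|]; [|lra]. exfalso; apply (HAm 0 Hz), PLo_0; auto. }
  assert (Hz1 : z < 1). { destruct (Req_dec z 1) as [->|]; [|lra]. exfalso; apply (HAm 1 Hz), PLo_1; auto. }
  assert (Hb1' : b <= 1). { destruct (Rle_lt_dec b 1); auto. destruct (Hb2 (b - 1)) as [x [Hx Hx']]; [lra|]. specialize (HA01 x Hx); lra. }
  assert (Ha0' : 0 <= a). { destruct (Rle_lt_dec 0 a); auto. destruct (Ha2 (0 - a)) as [x [Hx Hx']]; [lra|]. specialize (HA01 x Hx); lra. }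
  assert (Hfb : f b = b).
  { apply NNPP; intro Hne. destruct (moved_nbhd f b Hf ltac:(lra) Hne) as [d [Hd Hd2]].
    assert (b < 1). { destruct (Req_dec b 1) as [->|]; [|lra]. exfalso; apply Hne, PLo_1; auto. }
    set (d' := Rmin d (Rmin (1 - b) b)).
    assert (d' <= d) by apply Rmin_l. assert (d' <= Rmin (1 - b) b) by apply Rmin_r.
    assert (Rmin (1 - b) b <= 1 - b) by apply Rmin_l. assert (Rmin (1 - b) b <= b) by apply Rmin_r.
    assert (0 < d') by (repeat apply Rmin_glb_lt; lra).
    destruct (Hb2 d') as [x [Hx Hx']]; auto.
    assert (Hu : set_eq A (fun y => A y \/ (b - d' <= y <= b + d'))).
    { apply Hmax.
      - intros y Hy; left; auto.
      - intros y [Hy|Hy]; [apply Hm; auto|]. pose proof (HA01 x Hx). pose proof (Hb1 x Hx). unfold moved; split; [lra|]. apply Hd2; lra.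
      - apply connected_union; auto. { intros u v w Hu Hv Hw; lra. }
        exists x; split; auto. pose proof (Hb1 x Hx); lra. }
    assert (HH : A (b + d')) by (apply Hu; right; lra).
    specialize (Hb1 _ HH). lra. }
  assert (Hfa : f a = a).
  { apply NNPP; intro Hne. destruct (moved_nbhd f a Hf ltac:(lra) Hne) as [d [Hd Hd2]].
    assert (0 < a). { destruct (Req_dec a 0) as [->|]; [|lra]. exfalso; apply Hne, PLo_0; auto. }
    set (d' := Rmin d (Rmin (1 - a) a)).
    assert (d' <= d) by apply Rmin_l. assert (d' <= Rmin (1 - a) a) by apply Rmin_r.
    assert (Rmin (1 - a) a <= 1 - a) by apply Rmin_l. assert (Rmin (1 - a) a <= a) by apply Rmin_r.
    assert (a < 1) by lra.
    assert (0 < d') by (repeat apply Rmin_glb_lt; lra).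
    destruct (Ha2 d') as [x [Hx Hx']]; auto.
    assert (Hu : set_eq A (fun y => A y \/ (a - d' <= y <= a + d'))).
    { apply Hmax.
      - intros y Hy; left; auto.
      - intros y [Hy|Hy]; [apply Hm; auto|]. pose proof (HA01 x Hx). pose proof (Ha1 x Hx). unfold moved; split; [lra|]. apply Hd2; lra.
      - apply connected_union; auto. { intros u v w Hu Hv Hw; lra. }
        exists x; split; auto. pose proof (Ha1 x Hx); lra. }
    assert (HH : A (a - d')) by (apply Hu; right; lra).
    specialize (Ha1 _ HH). lra. }
  assert (Hza : z <> a) by (intros ->; apply (HAm a Hz); auto).
  assert (Hzb : z <> b) by (intros ->; apply (HAm b Hz); auto).
  exists a, b. split; [lra|]. split; [lra|]. split; [lra|]. split; [auto|]. split; [auto|].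
  intros x; split.
  - intros Hy. pose proof (Ha1 x Hy). pose proof (Hb1 x Hy). assert (x <> a) by (intros ->; apply (HAm a Hy); auto).
    assert (x <> b) by (intros ->; apply (HAm b Hy); auto). lra.
  - intros Hx. destruct (Ha2 (x - a)) as [x1 [Hx1 Hx1']]; [lra|].
    destruct (Hb2 (b - x)) as [x2 [Hx2 Hx2']]; [lra|].
    apply (Hc x1 x2); auto; lra.
Qed.

Fixpoint pw (h : R -> R) (m : nat) : R -> R :=
  match m with O => fun x => x | S m => fun x => h (pw h m x) end.

Lemma pw_S' h m x : pw h (S m) x = pw h m (h x).
Proof. revert x; induction m; intros x; simpl; auto. simpl in IHm. rewrite IHm; auto. Qed.

Lemma pw_add h a b x : pw h (a + b) x = pw h a (pw h b x).
Proof. induction a; simpl; auto. rewrite IHa; auto. Qed.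

Lemma pw_inv h hi : (forall x, hi (h x) = x) -> forall m x, pw hi m (pw h m x) = x.
Proof.
  intros H m; induction m; intros x; [simpl; auto|].
  rewrite pw_S'. change (pw h (S m) x) with (h (pw h m x)). rewrite H. auto.
Qed.

Lemma pw_fix h p m : h p = p -> pw h m p = p.
Proof. intros H; induction m; simpl; auto. rewrite IHm; auto. Qed.

Lemma sg_PLo G f : is_PL_subgroup G -> G f -> PLo f.
Proof. intros [H _] Hf; auto. Qed.

Lemma sg_id G : is_PL_subgroup G -> G (fun x => x).
Proof. intros [_ [H _]]; auto. Qed.

Lemma sg_comp G f g : is_PL_subgroup G -> G f -> G g -> G (fun x => g (f x)).
Proof. intros [_ [_ [H _]]]; auto. Qed.

Lemma sg_inv G f : is_PL_subgroup G -> G f -> exists fi, G fi /\ forall x, fi (f x) = x /\ f (fi x) = x.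
Proof. intros [_ [_ [_ H]]]; auto. Qed.

Lemma pw_G G h m : is_PL_subgroup G -> G h -> G (pw h m).
Proof.
  intros HG Hh; induction m; simpl. - apply sg_id; auto.
  - exact (sg_comp G (pw h m) h HG IHm Hh).
Qed.

Lemma orbital_conj f E h hi : PLo h -> PLo hi -> (forall x, hi (h x) = x /\ h (hi x) = x) ->
  orbital f E -> orbital (fun x => h (f (hi x))) (fun y => E (hi y)).
Proof.
  intros Hh Hhi Hinv [[z Hz] [Hm [Hc Hmax]]].
  assert (Hmv : forall y, moved (fun x => h (f (hi x))) y <-> moved f (hi y)).
  { intros y; unfold moved; split; intros [H1 H2].
    - split; [apply PLo_range; auto|]. intro He; apply H2. rewrite He. apply Hinv.
    - split; [apply (PLo_range_rev hi); auto|]. intro He. apply H2.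
      rewrite <- (proj1 (Hinv (f (hi y)))). rewrite He. auto. }
  assert (HE01 : forall x, E x -> 0 <= x <= 1) by (intros x Hx; apply Hm; auto).
  split; [|split; [|split]].
  - exists (h z). rewrite (proj1 (Hinv z)); auto.
  - intros y Hy. apply Hmv. apply Hm; auto.
  - intros x y w Hx Hy Hw.
    assert (0 <= x <= 1) by (apply (PLo_range_rev hi); auto).
    assert (0 <= y <= 1) by (apply (PLo_range_rev hi); auto).
    apply (Hc (hi x) (hi y)); auto. split; apply PLo_le; auto; lra.
  - intros D HD HDm HDc.
    assert (HE : set_eq E (fun u => D (h u))).
    { apply Hmax.
      - intros u Hu. apply HD. rewrite (proj1 (Hinv u)); auto.
      - intros u Hu. specialize (HDm _ Hu). apply Hmv in HDm. rewrite (proj1 (Hinv u)) in HDm; auto.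
      - intros x y w Hx Hy Hw.
        assert (Hx' := HDm _ Hx). assert (Hy' := HDm _ Hy).
        destruct Hx' as [Hx01 _]. destruct Hy' as [Hy01 _].
        assert (0 <= x <= 1) by (apply (PLo_range_rev h); auto).
        assert (0 <= y <= 1) by (apply (PLo_range_rev h); auto).
        apply (HDc (h x) (h y)); auto. split; apply PLo_le; auto; lra. }
    intros y. split; intro Hy.
    + apply HE in Hy. rewrite (proj2 (Hinv y)) in Hy; auto.
    + apply HE. rewrite (proj2 (Hinv y)); auto.
Qed.

Definition dflt : (R -> Prop) * (R -> R) := (fun _ => False, fun x => x).

Lemma tower_intro G t :
  (forall Ag, In Ag t -> G (snd Ag) /\ orbital (snd Ag) (fst Ag)) ->
  (forall i j, (i < length t)%nat -> (j < length t)%nat -> i <> j ->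
     ~ set_eq (fst (nth i t dflt)) (fst (nth j t dflt)) /\
     (set_incl (fst (nth i t dflt)) (fst (nth j t dflt)) \/ set_incl (fst (nth j t dflt)) (fst (nth i t dflt)))) ->
  tower G t.
Proof. intros H1 H2; split; auto. Qed.

Lemma tower_pair G t i j : tower G t -> (i < length t)%nat -> (j < length t)%nat -> i <> j ->
     ~ set_eq (fst (nth i t dflt)) (fst (nth j t dflt)) /\
     (set_incl (fst (nth i t dflt)) (fst (nth j t dflt)) \/ set_incl (fst (nth j t dflt)) (fst (nth i t dflt))).
Proof. intros [_ H] Hi Hj Hij. apply (H i j Hi Hj Hij). Qed.

Lemma tower_mem G t Ag : tower G t -> In Ag t -> G (snd Ag) /\ orbital (snd Ag) (fst Ag).
Proof. intros [H _]; auto. Qed.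

Lemma nth_map_seq {X} (F : nat -> X) N i d : (i < N)%nat -> nth i (map F (seq 0 N)) d = F i.
Proof.
  intros Hi. rewrite nth_indep with (d' := F 0%nat) by (rewrite length_map, length_seq; auto).
  rewrite map_nth. rewrite seq_nth; auto.
Qed.

Lemma chain_tower G f E h hi : is_PL_subgroup G -> G f -> orbital f E -> G h -> G hi ->
  (forall x, hi (h x) = x /\ h (hi x) = x) -> (forall y, E y -> E (hi y)) ->
  (exists p0, E (hi p0) /\ ~ E p0) -> forall N, has_tower_of_height G N.
Proof.
  intros HG Hf HE Hh Hhi Hinv Hinc [p0 [Hp1 Hp2]] N.
  set (F := fun m : nat => ((fun y => E (pw hi m y)), (fun x => pw h m (f (pw hi m x))))).
  exists (map F (seq 0 N)). split; [|rewrite length_map, length_seq; auto].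
  assert (Hnest : forall k m y, E (pw hi m y) -> E (pw hi (k + m) y)).
  { induction k; intros m y Hy; simpl; auto. }
  assert (Hinvm : forall m x, pw hi m (pw h m x) = x /\ pw h m (pw hi m x) = x).
  { intros m x; split; apply pw_inv; intros; apply Hinv. }
  apply tower_intro.
  - intros Ag HIn. apply in_map_iff in HIn. destruct HIn as [m [<- _]]. simpl. split.
    + apply (sg_comp G (fun x => f (pw hi m x)) (pw h m) HG).
      * apply (sg_comp G (pw hi m) f HG); auto. apply pw_G; auto.
      * apply pw_G; auto.
    + apply orbital_conj; auto; apply (sg_PLo G); auto; apply pw_G; auto.
  - intros i j Hi Hj Hij. rewrite length_map, length_seq in Hi, Hj.
    rewrite !nth_map_seq by auto. unfold F; simpl.
    assert (Hlt : forall m m', (m < m')%nat ->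
      ~ set_eq (fun y => E (pw hi m y)) (fun y => E (pw hi m' y)) /\
      set_incl (fun y => E (pw hi m y)) (fun y => E (pw hi m' y))).
    { intros m m' Hmm. replace m' with (S (m' - m - 1) + m)%nat by lia. split.
      - intros Heq. set (k := (m' - m - 1)%nat).
        specialize (Heq (pw h m p0)). cbv beta in Heq. rewrite (proj1 (Hinvm m p0)) in Heq.
        apply Hp2. apply Heq. rewrite pw_add. rewrite (proj1 (Hinvm m p0)).
        rewrite pw_S'. pose proof (Hnest (m' - m - 1)%nat 0%nat (hi p0) Hp1) as HH. rewrite Nat.add_0_r in HH. exact HH.
      - intros y Hy. apply Hnest; auto. }
    destruct (Nat.lt_total i j) as [H|[H|H]]; [|lia|].
    + destruct (Hlt i j H). split; auto.
    + destruct (Hlt j i H). split; auto. intro Hs; apply H0. intros y; split; intro; apply Hs; auto.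
Qed.

Definition GR (f : R -> R) p a e := 0 < e /\ forall t, 0 <= t <= e -> f (p + t) = p + a * t.
Definition GL (f : R -> R) p a e := 0 < e /\ forall t, 0 <= t <= e -> f (p - t) = p - a * t.

Lemma germR f p : PLo f -> 0 <= p < 1 -> f p = p ->
  exists a e, 0 < a /\ p + e <= 1 /\ GR f p a e.
Proof.
  intros Hf Hp Hfp. destruct (PLo_RA f p Hf Hp) as [e [a [b [He [He1 Hab]]]]].
  assert (Hb : b = p - a * p) by (rewrite Hab in Hfp by lra; lra).
  assert (Hpos : f p < f (p + e)) by (apply PLo_lt; auto; lra).
  rewrite !Hab in Hpos by lra.
  exists a, e. split; [nra|]. split; auto. split; auto.
  intros t Ht. rewrite Hab by lra. rewrite Hb. ring.
Qed.

Lemma germL f p : PLo f -> 0 < p <= 1 -> f p = p ->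
  exists a e, 0 < a /\ 0 <= p - e /\ GL f p a e.
Proof.
  intros Hf Hp Hfp. destruct (PLo_LA f p Hf Hp) as [e [a [b [He [He1 Hab]]]]].
  assert (Hb : b = p - a * p) by (rewrite Hab in Hfp by lra; lra).
  assert (Hpos : f (p - e) < f p) by (apply PLo_lt; auto; lra).
  rewrite !Hab in Hpos by lra.
  exists a, e. split; [nra|]. split; auto. split; auto.
  intros t Ht. rewrite Hab by lra. rewrite Hb. ring.
Qed.

Lemma small_mul a t e2 : 0 <= a -> 0 <= t -> 0 < e2 -> t <= e2 / (a + 1) -> a * t <= e2.
Proof.
  intros Ha Ht He Hte. assert (E : e2 / (a + 1) * (a + 1) = e2) by (field; lra).
  assert (t * (a + 1) <= e2 / (a + 1) * (a + 1)) by (apply Rmult_le_compat_r; lra).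
  nra.
Qed.

Lemma GR_comp f g p a b e1 e2 : GR f p a e1 -> GR g p b e2 -> 0 <= a ->
  GR (fun x => g (f x)) p (b * a) (Rmin e1 (e2 / (a + 1))).
Proof.
  intros [He1 Hf] [He2 Hg] Ha. split.
  - apply Rmin_glb_lt; auto. apply Rdiv_lt_0_compat; lra.
  - intros t Ht. pose proof (Rmin_l e1 (e2 / (a + 1))). pose proof (Rmin_r e1 (e2 / (a + 1))).
    rewrite Hf by lra. assert (a * t <= e2) by (apply small_mul; lra).
    rewrite Hg by nra. ring.
Qed.

Lemma GL_comp f g p a b e1 e2 : GL f p a e1 -> GL g p b e2 -> 0 <= a ->
  GL (fun x => g (f x)) p (b * a) (Rmin e1 (e2 / (a + 1))).
Proof.
  intros [He1 Hf] [He2 Hg] Ha. split.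
  - apply Rmin_glb_lt; auto. apply Rdiv_lt_0_compat; lra.
  - intros t Ht. pose proof (Rmin_l e1 (e2 / (a + 1))). pose proof (Rmin_r e1 (e2 / (a + 1))).
    rewrite Hf by lra. assert (a * t <= e2) by (apply small_mul; lra).
    rewrite Hg by nra. ring.
Qed.

Lemma GR_inv f fi p a a' e1 e2 : GR f p a e1 -> GR fi p a' e2 -> 0 <= a ->
  (forall x, fi (f x) = x) -> a' * a = 1.
Proof.
  intros H1 H2 Ha Hinv. destruct (GR_comp _ _ _ _ _ _ _ H1 H2 Ha) as [He Hc].
  specialize (Hc (Rmin e1 (e2 / (a + 1))) ltac:(lra)). cbv beta in Hc. rewrite Hinv in Hc.
  assert (HH : (a' * a - 1) * Rmin e1 (e2 / (a + 1)) = 0) by lra.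
  apply Rmult_integral in HH. lra.
Qed.

Lemma GL_inv f fi p a a' e1 e2 : GL f p a e1 -> GL fi p a' e2 -> 0 <= a ->
  (forall x, fi (f x) = x) -> a' * a = 1.
Proof.
  intros H1 H2 Ha Hinv. destruct (GL_comp _ _ _ _ _ _ _ H1 H2 Ha) as [He Hc].
  specialize (Hc (Rmin e1 (e2 / (a + 1))) ltac:(lra)). cbv beta in Hc. rewrite Hinv in Hc.
  assert (HH : (a' * a - 1) * Rmin e1 (e2 / (a + 1)) = 0) by lra.
  apply Rmult_integral in HH. lra.
Qed.

Lemma pow_le_one b M : 0 <= b <= 1 -> b ^ M <= 1.
Proof. intros Hb; induction M; simpl; [lra|]. pose proof (pow_le b M ltac:(lra)). nra. Qed.

Lemma GL_pw h p b e : GL h p b e -> 0 <= b <= 1 -> forall M, GL (pw h M) p (b ^ M) e.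
Proof.
  intros [He Hh] Hb M. split; auto. induction M; intros t Ht.
  - simpl. ring.
  - simpl. rewrite IHM by auto.
    assert (0 <= b ^ M <= 1) by (split; [apply pow_le; lra| apply pow_le_one; lra]).
    replace (p - b ^ M * t) with (p - (b ^ M * t)) by ring.
    rewrite Hh by nra. ring.
Qed.

Lemma U1 G p h : is_PL_subgroup G -> (forall g, G g -> g p = p) -> 0 <= p < 1 -> derived G h ->
  exists e, 0 < e /\ forall y, p <= y <= p + e -> h y = y.
Proof.
  intros HG Hfix Hp Hd. induction Hd as [|f g fi gi Hf Hg Hfi Hgi Hinvf Hinvg|f g Hd1 IH1 Hd2 IH2].
  - exists 1; split; auto; lra.
  - destruct (germR f p (sg_PLo G f HG Hf) Hp (Hfix f Hf)) as [af [ef [Haf [_ Gf]]]].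
    destruct (germR g p (sg_PLo G g HG Hg) Hp (Hfix g Hg)) as [ag [eg [Hag [_ Gg]]]].
    destruct (germR fi p (sg_PLo G fi HG Hfi) Hp (Hfix fi Hfi)) as [afi [efi [Hafi [_ Gfi]]]].
    destruct (germR gi p (sg_PLo G gi HG Hgi) Hp (Hfix gi Hgi)) as [agi [egi [Hagi [_ Ggi]]]].
    assert (E1 : afi * af = 1) by (apply (GR_inv f fi p af afi ef efi); auto; [lra|intros; apply Hinvf]).
    assert (E2 : agi * ag = 1) by (apply (GR_inv g gi p ag agi eg egi); auto; [lra|intros; apply Hinvg]).
    pose proof (GR_comp _ _ _ _ _ _ _ Gfi Ggi ltac:(lra)) as C1.
    pose proof (GR_comp _ _ _ _ _ _ _ C1 Gf ltac:(nra)) as C2.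
    assert (0 <= af * (agi * afi)) by (apply Rmult_le_pos; [lra|nra]).
    pose proof (GR_comp _ _ _ _ _ _ _ C2 Gg H) as C3.
    destruct C3 as [He Hc]. eexists; split; [exact He|].
    intros y Hy. specialize (Hc (y - p) ltac:(lra)). cbv beta in Hc.
    replace (p + (y - p)) with y in Hc by ring. rewrite Hc.
    replace (ag * (af * (agi * afi))) with ((agi * ag) * (afi * af)) by ring.
    rewrite E1, E2. ring.
  - destruct IH1 as [e1 [He1 H1]]; destruct IH2 as [e2 [He2 H2]].
    exists (Rmin e1 e2). pose proof (Rmin_l e1 e2). pose proof (Rmin_r e1 e2).
    split; [apply Rmin_glb_lt; auto|]. intros y Hy. rewrite H1 by lra. apply H2; lra.
Qed.

Lemma orbit_sup_fixed G c : is_PL_subgroup G -> 0 <= c <= 1 ->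
  exists s, c <= s <= 1 /\ (forall f, G f -> f s = s) /\
    (forall e, 0 < e -> exists k, G k /\ s - e < k c).
Proof.
  intros HG Hc.
  set (S := fun y => exists k, G k /\ y = k c).
  destruct (has_sup S) as [s [Hs1 Hs2]].
  { exists c. exists (fun x => x); split; auto. apply sg_id; auto. }
  { intros x [k [Hk ->]]. apply (PLo_range k c (sg_PLo G k HG Hk) Hc). }
  assert (Hcs : c <= s) by (apply Hs1; exists (fun x => x); split; auto; apply sg_id; auto).
  assert (Hs1' : s <= 1).
  { destruct (Rle_lt_dec s 1); auto. destruct (Hs2 (s - 1)) as [x [[k [Hk ->]] Hx]]; [lra|].
    pose proof (PLo_range k c (sg_PLo G k HG Hk) Hc). lra. }
  assert (Hnoup : forall f, G f -> ~ s < f s).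
  { intros f Hf Hlt. destruct (sg_inv G f HG Hf) as [fi [Hfi Hinv]].
    pose proof (sg_PLo G f HG Hf) as Pf. pose proof (sg_PLo G fi HG Hfi) as Pfi.
    pose proof (PLo_range f s Pf ltac:(lra)).
    set (t := (s + f s) / 2).
    assert (Ht : 0 <= t <= 1) by (unfold t; lra).
    assert (Hfit : fi t < s).
    { rewrite <- (proj1 (Hinv s)). apply PLo_lt; auto; unfold t; lra. }
    pose proof (PLo_range fi t Pfi Ht).
    destruct (Hs2 (s - fi t)) as [x [[k [Hk ->]] Hx]]; [lra|].
    pose proof (PLo_range k c (sg_PLo G k HG Hk) Hc).
    assert (f (fi t) < f (k c)) by (apply PLo_lt; auto; lra).
    rewrite (proj2 (Hinv t)) in H2.
    assert (S (f (k c))) by (exists (fun x => f (k x)); split; auto; apply sg_comp; auto).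
    specialize (Hs1 _ H3). unfold t in *; lra. }
  exists s. split; [lra|]. split.
  - intros f Hf. destruct (Rtotal_order (f s) s) as [Hlt|[Heq|Hgt]]; auto.
    + exfalso. destruct (sg_inv G f HG Hf) as [fi [Hfi Hinv]].
      apply (Hnoup fi Hfi). pose proof (sg_PLo G f HG Hf) as Pf. pose proof (sg_PLo G fi HG Hfi) as Pfi.
      destruct (Rle_lt_dec (fi s) s); auto.
      pose proof (PLo_range fi s Pfi ltac:(lra)).
      assert (f (fi s) <= f s) by (apply PLo_le; auto; lra).
      rewrite (proj2 (Hinv s)) in H0. lra.
    + exfalso; apply (Hnoup f Hf Hgt).
  - intros e He. destruct (Hs2 e He) as [x [[k [Hk ->]] Hx]]. exists k; auto.
Qed.

Lemma lemL G g c d : is_PL_subgroup G -> 0 <= c -> c < d -> d <= 1 -> G g -> g d = d ->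
  (forall y, c < y < d -> g y <> y) -> (exists f, G f /\ f c <> c) ->
  exists k B', G k /\ orbital k B' /\ B' c /\ (forall y, c < y < d -> B' y).
Proof.
  intros HG Hc Hcd Hd1 Hg Hgd Hgm [f [Hf Hfc]].
  destruct (orbit_sup_fixed G c HG ltac:(lra)) as [s [Hs [Hfix Happ]]].
  assert (Hsc : s <> c) by (intros ->; apply Hfc, Hfix; auto).
  assert (Hsd : d <= s).
  { destruct (Rle_lt_dec d s); auto. exfalso. apply (Hgm s); [lra|]. apply Hfix; auto. }
  destruct (Rle_lt_dec s d) as [Hsd2|Hsd2].
  -
    assert (s = d) by lra. subst s.
    pose proof (sg_PLo G g HG Hg) as Pg.
    destruct (germL g d Pg ltac:(lra) Hgd) as [b [eg [Hb [Heg Gg]]]].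
    assert (Hb1 : b <> 1).
    { intros ->. set (y0 := d - Rmin eg (d - c) / 2).
      assert (Rmin eg (d - c) <= eg) by apply Rmin_l. assert (Rmin eg (d - c) <= d - c) by apply Rmin_r.
      assert (0 < Rmin eg (d - c)) by (apply Rmin_glb_lt; destruct Gg; lra).
      apply (Hgm y0); [unfold y0; lra|].
      destruct Gg as [_ Gg]. specialize (Gg (d - y0) ltac:(unfold y0; lra)).
      replace (d - (d - y0)) with y0 in Gg by ring. rewrite Gg; ring. }
    destruct (sg_inv G g HG Hg) as [gi [Hgi Hinvg]].
    pose proof (sg_PLo G gi HG Hgi) as Pgi.
    assert (Hgid : gi d = d) by (rewrite <- Hgd at 1; apply Hinvg).
    destruct (germL gi d Pgi ltac:(lra) Hgid) as [b' [eg' [Hb' [Heg' Ggi]]]].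
    assert (Ebb : b' * b = 1) by (apply (GL_inv g gi d b b' eg eg'); auto; [lra|intros; apply Hinvg]).
    assert (Hh : exists h hi bh eh, G h /\ G hi /\ (forall x, hi (h x) = x /\ h (hi x) = x) /\
                   0 < bh < 1 /\ GL h d bh eh).
    { destruct (Rlt_le_dec b 1).
      - exists g, gi, b, eg. refine (conj Hg (conj Hgi (conj Hinvg (conj _ Gg)))); lra.
      - exists gi, g, b', eg'. split; auto. split; auto. split; [intros x; split; apply Hinvg|].
        split; auto. nra. }
    destruct Hh as [h [hi [bh [eh [Hh [Hhi [Hinv [Hbh Gh]]]]]]]].
    assert (Heh : 0 < eh) by (destruct Gh; auto).
    destruct (Happ eh Heh) as [k [Hk Hkc]].
    pose proof (sg_PLo G k HG Hk) as Pk.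
    destruct (germL k d Pk ltac:(lra) (Hfix k Hk)) as [kap [ek [Hkap [Hek Gk]]]].
    assert (Hek0 : 0 < ek) by (destruct Gk; auto).
    set (r := Rmin (/ kap) (ek / eh)).
    assert (Hr : 0 < r) by (apply Rmin_glb_lt; [apply Rinv_0_lt_compat; auto| apply Rdiv_lt_0_compat; auto]).
    destruct (pow_lt_1_zero bh ltac:(rewrite Rabs_right; lra) r Hr) as [M HM].
    specialize (HM M (le_n M)). rewrite Rabs_right in HM by (apply Rle_ge, pow_le; lra).
    assert (HM1 : bh ^ M * kap < 1).
    { assert (r <= / kap) by apply Rmin_l.
      assert (bh ^ M * kap < / kap * kap) by (apply Rmult_lt_compat_r; lra).
      rewrite Rinv_l in H0; lra. }
    assert (HM2 : bh ^ M * eh < ek).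
    { assert (r <= ek / eh) by apply Rmin_r.
      assert (bh ^ M * eh < ek / eh * eh) by (apply Rmult_lt_compat_r; lra).
      replace (ek / eh * eh) with ek in H0 by (field; lra). lra. }
    assert (HbM : 0 <= bh ^ M) by (apply pow_le; lra).
    pose proof (GL_pw h d bh eh Gh ltac:(lra) M) as [_ GhM].
    destruct Gk as [_ Gk].
    set (p := fun x => pw h M (k x)).
    assert (Hp : G p) by exact (sg_comp G k (pw h M) HG Hk (pw_G G h M HG Hh)).
    assert (Hpm : forall y, c <= y < d -> p y > y).
    { intros y Hy.
      assert (k c <= k y) by (apply PLo_le; auto; lra).
      assert (k y < k d) by (apply PLo_lt; auto; lra).
      rewrite (Hfix k Hk) in H0.
      unfold p. replace (k y) with (d - (d - k y)) by ring.
      rewrite GhM by lra.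
      destruct (Rle_lt_dec (d - ek) y).
      - specialize (Gk (d - y) ltac:(lra)). replace (d - (d - y)) with y in Gk by ring.
        rewrite Gk. replace (d - (d - kap * (d - y))) with (kap * (d - y)) by ring.
        assert (bh ^ M * (kap * (d - y)) < d - y).
        { replace (bh ^ M * (kap * (d - y))) with ((bh ^ M * kap) * (d - y)) by ring.
          assert (0 < d - y) by lra. nra. }
        lra.
      - assert (bh ^ M * (d - k y) <= bh ^ M * eh) by (apply Rmult_le_compat_l; lra).
        lra. }
    assert (Hpmv : moved p c) by (split; [lra|]; pose proof (Hpm c ltac:(lra)); lra).
    exists p, (comp p c). split; auto. split; [apply comp_orbital; auto|].
    assert (Hsub : set_incl (fun y => c <= y < d) (comp p c)).
    { apply comp_contains.
      - intros x y w Hx Hy Hw; lra.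
      - intros y Hy. split; [lra|]. pose proof (Hpm y Hy); lra.
      - lra. }
    split; [apply Hsub; lra|]. intros y Hy; apply Hsub; lra.
  -
    destruct (Happ (s - d) ltac:(lra)) as [k [Hk Hkc]].
    pose proof (sg_PLo G k HG Hk) as Pk.
    assert (Hkm : forall y, c <= y <= d -> k y > y).
    { intros y Hy. assert (k c <= k y) by (apply PLo_le; auto; lra). lra. }
    assert (Hkmv : moved k c) by (split; [lra|]; pose proof (Hkm c ltac:(lra)); lra).
    exists k, (comp k c). split; auto. split; [apply comp_orbital; auto|].
    assert (Hsub : set_incl (fun y => c <= y <= d) (comp k c)).
    { apply comp_contains.
      - intros x y w Hx Hy Hw; lra.
      - intros y Hy. split; [lra|]. pose proof (Hkm y Hy); lra.
      - lra. }
    split; [apply Hsub; lra|]. intros y Hy; apply Hsub; lra.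
Qed.

Lemma cyc_inf h hi c b : PLo h -> PLo hi -> (forall x, hi (h x) = x /\ h (hi x) = x) ->
  0 <= c -> c < b -> b <= 1 -> h c = c -> h b < b -> (forall y, c < y <= b -> h y <> y) ->
  forall e, 0 < e -> exists m, pw h m b < c + e.
Proof.
  intros Ph Phi Hinv Hc Hcb Hb1 Hhc Hhb Hm e He.
  assert (Hrng : forall m, c < pw h m b <= b).
  { induction m; simpl; [lra|].
    assert (h c < h (pw h m b)) by (apply PLo_lt; auto; lra).
    assert (h (pw h m b) <= h b) by (apply PLo_le; auto; lra). lra. }
  set (Ss := fun y => exists m, y = pw h m b).
  destruct (has_inf Ss) as [t [Ht1 Ht2]].
  { exists b; exists 0%nat; auto. } { intros x [m ->]. specialize (Hrng m); lra. }
  assert (Htc : c <= t).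
  { destruct (Rle_lt_dec c t); auto. destruct (Ht2 (c - t)) as [x [[m ->] Hx]]; [lra|].
    specialize (Hrng m); lra. }
  assert (Htb : t <= b) by (apply Ht1; exists 0%nat; auto).
  assert (Htc' : t = c).
  { destruct (Req_dec t c); auto. exfalso.
    assert (Hne : h t <> t) by (apply Hm; lra).
    destruct (Rtotal_order (h t) t) as [Hlt|[Heq|Hgt]]; [|auto|].
    - assert (Hhit : t < hi t).
      { destruct (Rle_lt_dec (hi t) t); auto.
        assert (0 <= hi t <= 1) by (apply PLo_range; auto; lra).
        assert (h (hi t) <= h t) by (apply PLo_le; auto; lra).
        rewrite (proj2 (Hinv t)) in H1. lra. }
      assert (0 <= hi t <= 1) by (apply PLo_range; auto; lra).
      destruct (Ht2 (hi t - t)) as [x [[m ->] Hx]]; [lra|].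
      specialize (Hrng m).
      assert (h (pw h m b) < h (hi t)) by (apply PLo_lt; auto; lra).
      rewrite (proj2 (Hinv t)) in H1.
      assert (Ss (pw h (S m) b)) by (exists (S m); auto).
      specialize (Ht1 _ H2). simpl in Ht1. lra.
    - assert (Hall : forall m, h t <= pw h m b).
      { induction m; simpl.
        - assert (h t <= h b) by (apply PLo_le; auto; lra). lra.
        - assert (t <= pw h m b) by (apply Ht1; exists m; auto).
          apply PLo_le; auto; [lra|]. specialize (Hrng m); lra. }
      destruct (Ht2 (h t - t)) as [x [[m ->] Hx]]; [lra|].
      specialize (Hall m). lra. }
  subst t. destruct (Ht2 e He) as [x [[m ->] Hx]]. exists m; auto.
Qed.

Lemma inv_fix (f fi : R -> R) (p : R) : (forall x, fi (f x) = x /\ f (fi x) = x) -> f p = p -> fi p = p.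
Proof. intros H Hp. rewrite <- Hp at 1. apply H. Qed.

Lemma inv_moves (f fi : R -> R) (y : R) : (forall x, fi (f x) = x /\ f (fi x) = x) -> f y <> y -> fi y <> y.
Proof. intros H Hy He. apply Hy. rewrite <- He at 1. apply H. Qed.

Lemma choose_dir G g y : is_PL_subgroup G -> G g -> 0 <= y <= 1 -> g y <> y -> forall up : bool,
  exists h hi, G h /\ G hi /\ (forall x, hi (h x) = x /\ h (hi x) = x) /\
    (forall z, g z = z -> h z = z) /\ (forall z, h z = z -> g z = z) /\
    (if up then y < h y else h y < y).
Proof.
  intros HG Hg Hy Hne up.
  destruct (sg_inv G g HG Hg) as [gi [Hgi Hinv]].
  pose proof (sg_PLo G g HG Hg) as Pg. pose proof (sg_PLo G gi HG Hgi) as Pgi.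
  assert (Hginv : forall x, g (gi x) = x /\ gi (g x) = x) by (intros x; split; apply Hinv).
  assert (Hgi_dir : (g y < y -> y < gi y) /\ (y < g y -> gi y < y)).
  { split; intros H.
    - destruct (Rle_lt_dec (gi y) y); auto. exfalso.
      assert (0 <= gi y <= 1) by (apply PLo_range; auto).
      assert (g (gi y) <= g y) by (apply PLo_le; auto; lra).
      rewrite (proj2 (Hinv y)) in H1. lra.
    - destruct (Rle_lt_dec y (gi y)); auto. exfalso.
      assert (0 <= gi y <= 1) by (apply PLo_range; auto).
      assert (g y <= g (gi y)) by (apply PLo_le; auto; lra).
      rewrite (proj2 (Hinv y)) in H1. lra. }
  assert (T1 : forall z, g z = z -> gi z = z) by (intros z Hz; apply (inv_fix g gi); auto).
  assert (T2 : forall z, gi z = z -> g z = z) by (intros z Hz; apply (inv_fix gi g); auto).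
  destruct (Rtotal_order (g y) y) as [Hlt|[Heq|Hgt]]; [|contradiction|].
  - destruct up.
    + exists gi, g. refine (conj Hgi (conj Hg (conj Hginv (conj T1 (conj T2 _))))). apply Hgi_dir; auto.
    + exists g, gi. refine (conj Hg (conj Hgi (conj Hinv (conj (fun z H => H) (conj (fun z H => H) _))))). auto.
  - destruct up.
    + exists g, gi. refine (conj Hg (conj Hgi (conj Hinv (conj (fun z H => H) (conj (fun z H => H) _))))). auto.
    + exists gi, g. refine (conj Hgi (conj Hg (conj Hginv (conj T1 (conj T2 _))))). apply Hgi_dir; auto.
Qed.

Lemma inv_lt_of h hi y : PLo h -> PLo hi -> (forall x, hi (h x) = x /\ h (hi x) = x) -> 0 <= y <= 1 ->
  (y < h y -> hi y < y) /\ (h y < y -> y < hi y).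
Proof.
  intros Ph Phi Hinv Hy. assert (0 <= hi y <= 1) by (apply PLo_range; auto). split; intros H1.
  - destruct (Rle_lt_dec y (hi y)); auto. assert (h y <= h (hi y)) by (apply PLo_le; auto; lra).
    rewrite (proj2 (Hinv y)) in H0. lra.
  - destruct (Rle_lt_dec (hi y) y); auto. assert (h (hi y) <= h y) by (apply PLo_le; auto; lra).
    rewrite (proj2 (Hinv y)) in H0. lra.
Qed.

Lemma lower_elem G g f B A : is_PL_subgroup G ->
  (~ forall N, has_tower_of_height G N) ->
  (forall p B', G p -> orbital p B' -> set_incl B B' -> ~ set_eq B B' -> False) ->
  G g -> orbital g B -> G f -> orbital f A -> set_incl A B -> ~ set_eq A B ->
  exists w, derived G w /\ orbital w A.
Proof.
  intros HG Hfin Hext Hg HoB Hf HoA HAB HneAB.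
  pose proof (sg_PLo G g HG Hg) as Pg. pose proof (sg_PLo G f HG Hf) as Pf.
  destruct (orbital_interval g B Pg HoB) as [c [d [Hc0 [Hcd [Hd1 [Hgc [Hgd HB]]]]]]].
  destruct (orbital_interval f A Pf HoA) as [a [b [Ha0 [Hab [Hb1 [Hfa [Hfb HA]]]]]]].
  assert (Hca : c <= a).
  { destruct (Rle_lt_dec c a); auto. exfalso.
    set (y := (a + Rmin b c) / 2). pose proof (Rmin_l b c). pose proof (Rmin_r b c).
    assert (a < Rmin b c) by (apply Rmin_glb_lt; lra).
    assert (A y) by (apply HA; unfold y; lra). apply HAB, HB in H2. unfold y in H2; lra. }
  assert (Hbd : b <= d).
  { destruct (Rle_lt_dec b d); auto. exfalso.
    set (y := (Rmax a d + b) / 2). pose proof (Rmax_l a d). pose proof (Rmax_r a d).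
    assert (Rmax a d < b) by (apply Rmax_lub_lt; lra).
    assert (A y) by (apply HA; unfold y; lra). apply HAB, HB in H2. unfold y in H2; lra. }
  assert (Hgm : forall y, c < y < d -> g y <> y) by (intros y Hy; apply HoB, HB; auto).
  assert (Hext' : forall k B', G k -> orbital k B' -> B' c -> (forall y, c < y < d -> B' y) -> False).
  { intros k B' Hk HoB' Hc Hin. apply (Hext k B' Hk HoB').
    - intros y Hy; apply Hin, HB; auto.
    - intros Heq. apply Heq in Hc. apply HB in Hc. lra. }
  destruct (Req_dec (f c) c) as [Hfc|Hfc].
  2:{ exfalso. destruct (lemL G g c d HG Hc0 Hcd Hd1 Hg Hgd Hgm) as [k [B' [Hk [HoB' [Hc Hin]]]]].
      { exists f; auto. } apply (Hext' k B'); auto. }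
  destruct (germR f c Pf ltac:(lra) Hfc) as [al [ep [Hal [Hep [Hep0 Gf]]]]].
  destruct (sg_inv G g HG Hg) as [gi [Hgi Hinvg]].
  destruct (Req_dec al 1) as [Hal1|Hal1].
  2:{ exfalso. apply Hfin.
      set (q := c + Rmin ep (d - c) / 2).
      pose proof (Rmin_l ep (d - c)). pose proof (Rmin_r ep (d - c)).
      assert (0 < Rmin ep (d - c)) by (apply Rmin_glb_lt; lra).
      assert (Hfm : forall z, c < z <= c + ep -> f z <> z).
      { intros z Hz. replace z with (c + (z - c)) by ring. rewrite Gf by lra.
        intro Hh. assert (HH : (al - 1) * (z - c) = 0) by lra. apply Rmult_integral in HH. lra. }
      assert (Hqm : moved f q) by (split; [unfold q; lra|]; apply Hfm; unfold q; lra).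
      set (E := comp f q).
      assert (HoE : orbital f E) by (apply comp_orbital; auto).
      assert (HcE : forall y, c < y <= q -> E y).
      { intros y Hy.
        assert (Hcc : set_incl (fun z => y <= z <= q) (comp f q)).
        { apply comp_contains.
          - intros u v w Hu Hv Hw; lra.
          - intros z Hz. split; [unfold q in *; lra|]. apply Hfm; unfold q in *; lra.
          - lra. }
        apply Hcc; lra. }
      destruct (orbital_interval f E Pf HoE) as [e1 [x [He10 [Hex [Hx1 [Hfe1 [Hfx HE]]]]]]].
      assert (Hqx : q < x) by (assert (HEq : E q) by (apply HcE; unfold q; lra); apply HE in HEq; lra).
      assert (He1c : e1 = c).
      { destruct (Rtotal_order e1 c) as [Hl|[Heq|Hg']]; auto.
        - exfalso. assert (HEc : E c) by (apply HE; unfold q in *; lra).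
          apply (proj1 (proj2 HoE)) in HEc. destruct HEc as [_ Hn]. apply Hn; auto.
        - exfalso. set (y := (c + Rmin e1 q) / 2). pose proof (Rmin_l e1 q). pose proof (Rmin_r e1 q).
          assert (c < Rmin e1 q) by (apply Rmin_glb_lt; unfold q; lra).
          assert (HEy : E y) by (apply HcE; unfold y; lra). apply HE in HEy. unfold y in HEy; lra. }
      subst e1.
      assert (Hxd : x < d).
      { destruct (Rlt_le_dec x d); auto. exfalso.
        assert (HAE : set_incl A E) by (intros y Hy; apply HE; apply HAB, HB in Hy; lra).
        destruct HoA as [_ [HAm [_ HAmax]]].
        assert (Heq : set_eq A E) by (apply HAmax; auto; apply HoE).
        apply HneAB. intros y; split; [apply HAB|]. intros Hy. apply Heq. apply HE. apply HB in Hy. lra. }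
      assert (Hgx : g x <> x) by (apply Hgm; unfold q in *; lra).
      destruct (choose_dir G g x HG Hg ltac:(lra) Hgx true) as [h [hi [Hh [Hhi [Hinv [Hfx1 [Hfx2 Hup]]]]]]].
      pose proof (sg_PLo G h HG Hh) as Ph. pose proof (sg_PLo G hi HG Hhi) as Phi.
      assert (Hhic : hi c = c) by (apply (inv_fix h hi); auto).
      assert (Hhix : hi x < x) by (apply (inv_lt_of h hi x); auto; lra).
      apply (chain_tower G f E h hi HG Hf HoE Hh Hhi Hinv).
      - intros y Hy. apply HE in Hy. apply HE.
        assert (hi c < hi y) by (apply PLo_lt; auto; lra).
        assert (hi y < hi x) by (apply PLo_lt; auto; lra). lra.
      - exists x. split.
        + apply HE. assert (hi c < hi x) by (apply PLo_lt; auto; lra). lra.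
        + intros Hx. apply HE in Hx. lra. }
  subst al.
  assert (Hid : forall y, c <= y <= c + ep -> f y = y).
  { intros y Hy. replace y with (c + (y - c)) at 1 by ring. rewrite Gf by lra. ring. }
  destruct (Req_dec b d) as [Hbd'|Hbd'].
  - exfalso. apply Hfin. subst b.
    assert (Hca' : c < a).
    { destruct (Req_dec c a); [|lra]. subst a. exfalso. apply HneAB.
      intros y; split; [apply HAB|]. intros Hy. apply HA, HB; auto. }
    assert (Hga : g a <> a) by (apply Hgm; lra).
    destruct (choose_dir G g a HG Hg ltac:(lra) Hga false) as [h [hi [Hh [Hhi [Hinv [Hfx1 [Hfx2 Hdn]]]]]]].
    pose proof (sg_PLo G h HG Hh) as Ph. pose proof (sg_PLo G hi HG Hhi) as Phi.
    assert (Hhid : hi d = d) by (apply (inv_fix h hi); auto).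
    assert (Hhia : a < hi a) by (apply (inv_lt_of h hi a); auto; lra).
    apply (chain_tower G f A h hi HG Hf HoA Hh Hhi Hinv).
    + intros y Hy. apply HA in Hy. apply HA.
      assert (hi a < hi y) by (apply PLo_lt; auto; lra).
      assert (hi y < hi d) by (apply PLo_lt; auto; lra). lra.
    + exists a. split.
      * apply HA. assert (hi a < hi d) by (apply PLo_lt; auto; lra). lra.
      * intros Ha'. apply HA in Ha'. lra.
  - assert (Hbd2 : b < d) by lra.
    assert (Hgb : g b <> b) by (apply Hgm; lra).
    destruct (choose_dir G g b HG Hg ltac:(lra) Hgb false) as [h [hi [Hh [Hhi [Hinv [Hfx1 [Hfx2 Hdn]]]]]]].
    pose proof (sg_PLo G h HG Hh) as Ph. pose proof (sg_PLo G hi HG Hhi) as Phi.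
    destruct (cyc_inf h hi c b Ph Phi Hinv Hc0 ltac:(lra) Hb1 (Hfx1 c Hgc) Hdn) with (e := ep) as [m Hm].
    { intros y Hy Hhy. apply (Hgm y); [lra|]. apply Hfx2; auto. }
    { lra. }
    destruct (sg_inv G f HG Hf) as [fi [Hfi Hinvf]].
    pose proof (pw_G G h m HG Hh) as Hhm. pose proof (pw_G G hi m HG Hhi) as Hhim.
    pose proof (sg_PLo G _ HG Hhm) as Phm.
    assert (Hinvm : forall x, pw h m (pw hi m x) = x /\ pw hi m (pw h m x) = x).
    { intros x; split; apply pw_inv; intros; apply Hinv. }
    assert (Hinvf' : forall x, f (fi x) = x /\ fi (f x) = x) by (intros x; split; apply Hinvf).
    exists (fun x => fi (pw hi m (f (pw h m x)))). split.
    + exact (derived_comm G (pw hi m) fi (pw h m) f Hhim Hfi Hhm Hf Hinvm Hinvf').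
    + assert (Hw : forall y, a <= y <= b -> fi (pw hi m (f (pw h m y))) = fi y).
      { intros y Hy. assert (Hc' : pw h m c = c) by (apply pw_fix; apply Hfx1; auto).
        assert (pw h m c <= pw h m y) by (apply PLo_le; auto; lra).
        assert (pw h m y <= pw h m b) by (apply PLo_le; auto; lra).
        rewrite Hid by lra. rewrite (proj2 (Hinvm y)). auto. }
      apply (orbital_seteq _ (fun y => a < y < b)); [|intros y; split; intro; apply HA; auto].
      apply orbital_crit; auto.
      * rewrite Hw by lra. apply (inv_fix f fi); auto.
      * rewrite Hw by lra. apply (inv_fix f fi); auto.
      * intros y Hy. rewrite Hw by lra. apply (inv_moves f fi); auto. apply HoA, HA; auto.
Qed.

Lemma derived_sub G h : is_PL_subgroup G -> derived G h -> G h.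
Proof.
  intros HG Hd. induction Hd.
  - apply sg_id; auto.
  - apply (sg_comp G (fun x => f (gi (fi x))) g HG); auto.
    apply (sg_comp G (fun x => gi (fi x)) f HG); auto.
    apply (sg_comp G fi gi HG); auto.
  - apply sg_comp; auto.
Qed.

Lemma derived_subgroup G : is_PL_subgroup G -> is_PL_subgroup (derived G).
Proof.
  intros HG. split; [|split; [|split]].
  - intros f Hf. apply (sg_PLo G); auto. apply derived_sub; auto.
  - apply derived_id.
  - intros f g Hf Hg. apply derived_mul; auto.
  - intros f Hd. induction Hd as [|f g fi gi Hf Hg Hfi Hgi Hinvf Hinvg|f g Hd1 IH1 Hd2 IH2].
    + exists (fun x => x). split; [apply derived_id|]. auto.
    + exists (fun x => f (g (fi (gi x)))). split.
      * apply (derived_comm G g f gi fi); auto.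
      * assert (e1 : forall x, fi (f x) = x) by apply Hinvf.
        assert (e2 : forall x, f (fi x) = x) by apply Hinvf.
        assert (e3 : forall x, gi (g x) = x) by apply Hinvg.
        assert (e4 : forall x, g (gi x) = x) by apply Hinvg.
        intros x; split; repeat first [rewrite e1 | rewrite e2 | rewrite e3 | rewrite e4]; auto.
    + destruct IH1 as [fi [Hfi Hinvf]]. destruct IH2 as [gi [Hgi Hinvg]].
      exists (fun x => fi (gi x)). split.
      * apply (derived_mul G gi fi); auto.
      * intros x. split.
        -- rewrite (proj1 (Hinvg _)). apply Hinvf.
        -- rewrite (proj2 (Hinvf _)). apply Hinvg.
Qed.

Definition At (t : list ((R -> Prop) * (R -> R))) j := fst (nth j t dflt).

Lemma top_index G t : tower G t -> (0 < length t)%nat ->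
  exists k, (k < length t)%nat /\ forall j, (j < length t)%nat -> set_incl (At t j) (At t k).
Proof.
  intros Ht Hl.
  assert (Hm : forall m, (0 < m)%nat -> (m <= length t)%nat ->
    exists k, (k < m)%nat /\ forall j, (j < m)%nat -> set_incl (At t j) (At t k)).
  { induction m; intros H0 H1; [lia|]. destruct m.
    - exists 0%nat; split; auto. intros j Hj. replace j with 0%nat by lia. intros x Hx; auto.
    - destruct (IHm ltac:(lia) ltac:(lia)) as [k [Hk Hkj]].
      destruct (tower_pair G t k (S m) Ht ltac:(lia) ltac:(lia) ltac:(lia)) as [_ [Hkm|Hmk]].
      + exists (S m); split; [lia|]. intros j Hj.
        destruct (Nat.eq_dec j (S m)) as [->|Hne]; [intros x Hx; auto|].
        intros x Hx. apply Hkm. apply (Hkj j); auto. lia.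
      + exists k; split; [lia|]. intros j Hj.
        destruct (Nat.eq_dec j (S m)) as [->|Hne]; [exact Hmk|]. apply Hkj; lia. }
  destruct (Hm (length t) Hl (le_n _)) as [k [Hk Hkj]]. exists k; auto.
Qed.

Lemma extend_top G t k p B' : tower G t -> (k < length t)%nat ->
  (forall j, (j < length t)%nat -> set_incl (At t j) (At t k)) ->
  G p -> orbital p B' -> set_incl (At t k) B' -> ~ set_eq (At t k) B' ->
  tower G ((B', p) :: t).
Proof.
  intros Ht Hk Htop Hp HoB Hinc Hne. apply tower_intro.
  - intros Ag [<-|HIn]; simpl; auto. apply (tower_mem G t); auto.
  - intros i j Hi Hj Hij. simpl in Hi, Hj.
    assert (Hstrict : forall j, (j < length t)%nat -> ~ set_eq B' (At t j) /\ set_incl (At t j) B').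
    { intros j0 Hj0. split.
      - intros Heq. apply Hne. intros x; split; [apply Hinc|]. intros Hx.
        apply (Htop j0 Hj0). apply Heq; auto.
      - intros x Hx. apply Hinc, (Htop j0 Hj0); auto. }
    destruct i as [|i]; destruct j as [|j]; [lia| | |].
    + simpl. destruct (Hstrict j ltac:(lia)) as [H1 H2]. split; auto.
    + simpl. destruct (Hstrict i ltac:(lia)) as [H1 H2]. split; auto.
      intros Heq. apply H1. intros x; split; intros; apply Heq; auto.
    + simpl. apply (tower_pair G t i j Ht); lia.
Qed.

Lemma tower_mono G1 G2 t : (forall h, G1 h -> G2 h) -> tower G1 t -> tower G2 t.
Proof.
  intros Hs [H1 H2]. split; auto. intros Ag HIn. destruct (H1 Ag HIn). split; auto.
Qed.

Lemma list_choice (P : (R -> Prop) -> (R -> R) -> Prop) (l : list ((R -> Prop) * (R -> R))) :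
  (forall Ag, In Ag l -> exists w, P (fst Ag) w) ->
  exists l', map fst l' = map fst l /\ forall Ag, In Ag l' -> P (fst Ag) (snd Ag).
Proof.
  induction l as [|a l IH]; intros H.
  - exists nil; split; auto. intros Ag [].
  - destruct (H a (or_introl eq_refl)) as [w Hw].
    destruct IH as [l' [Hl1 Hl2]]. { intros Ag HIn; apply H; right; auto. }
    exists ((fst a, w) :: l'). split; [simpl; rewrite Hl1; auto|].
    intros Ag [<-|HIn]; simpl; auto.
Qed.

Lemma nth_remove {X} (l : list X) k i d : (k < length l)%nat ->
  nth i (firstn k l ++ skipn (S k) l) d = nth (if (i <? k)%nat then i else S i) l d.
Proof.
  intros Hk. destruct (i <? k)%nat eqn:E.
  - apply Nat.ltb_lt in E. rewrite app_nth1 by (rewrite firstn_length_le; lia).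
    rewrite nth_firstn. rewrite (proj2 (Nat.ltb_lt i k) E). auto.
  - apply Nat.ltb_ge in E. rewrite app_nth2 by (rewrite firstn_length_le; lia).
    rewrite firstn_length_le by lia. rewrite nth_skipn. f_equal. lia.
Qed.

Theorem lemma18 (G : (R -> R) -> Prop) (n : nat) :
  is_PL_subgroup G -> (1 <= n)%nat -> depth_eq G n ->
  is_PL_subgroup (derived G) /\ depth_eq (derived G) (n - 1).
Proof.
  intros HG Hn [[t [Ht Hlen]] Hno].
  pose proof (derived_subgroup G HG) as HDG.
  split; auto. split.
  -
    destruct (top_index G t Ht ltac:(lia)) as [k [Hk Htop]].
    assert (Hext : forall p B', G p -> orbital p B' -> set_incl (At t k) B' -> ~ set_eq (At t k) B' -> False).
    { intros p B' Hp HoB Hinc Hne. apply Hno. exists ((B', p) :: t). split.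
      - apply (extend_top G t k p B'); auto.
      - simpl; lia. }
    assert (Hfin : ~ forall N, has_tower_of_height G N) by (intros HH; apply Hno, HH).
    set (t' := firstn k t ++ skipn (S k) t).
    assert (Hlen' : length t' = (n - 1)%nat).
    { unfold t'. rewrite length_app, firstn_length_le, length_skipn by lia. lia. }
    set (sg := fun i => if (i <? k)%nat then i else S i).
    assert (Hsg : forall i, (i < length t')%nat -> nth i t' dflt = nth (sg i) t dflt /\ (sg i < n)%nat /\ sg i <> k).
    { intros i Hi. unfold sg, t'. rewrite nth_remove by lia. split; auto.
      destruct (Nat.ltb_spec i k); lia. }
    assert (Hsg_inj : forall i j, (i < length t')%nat -> (j < length t')%nat -> i <> j -> sg i <> sg j).
    { intros i j Hi Hj Hij. unfold sg.
      destruct (Nat.ltb_spec i k); destruct (Nat.ltb_spec j k); lia. }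
    destruct (list_choice (fun A w => derived G w /\ orbital w A) t') as [l [Hl1 Hl2]].
    { intros Ag HIn. destruct (In_nth t' Ag dflt HIn) as [i [Hi <-]].
      destruct (Hsg i Hi) as [-> [Hsn Hsk]].
      destruct (tower_mem G t (nth k t dflt) Ht ltac:(apply nth_In; lia)) as [Hgk Hok].
      destruct (tower_mem G t (nth (sg i) t dflt) Ht ltac:(apply nth_In; lia)) as [Hgi Hoi].
      destruct (tower_pair G t (sg i) k Ht ltac:(lia) ltac:(lia) Hsk) as [Hne _].
      apply (lower_elem G (snd (nth k t dflt)) (snd (nth (sg i) t dflt)) (At t k) (At t (sg i)) HG Hfin Hext Hgk Hok Hgi Hoi).
      - apply Htop; lia.
      - exact Hne. }
    assert (Hll : length l = length t') by (rewrite <- (length_map fst l), Hl1, length_map; auto).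
    exists l. split; [|lia].
    apply tower_intro.
    + intros Ag HIn. destruct (Hl2 Ag HIn) as [Hd Ho]. split; auto.
    + intros i j Hi Hj Hij.
      assert (Hf : forall i, (i < length t')%nat -> fst (nth i l dflt) = At t (sg i)).
      { intros i0 Hi0. change (fun _ : R => False) with (fst dflt).
        rewrite <- map_nth. rewrite Hl1. rewrite map_nth. unfold At. f_equal. apply Hsg; auto. }
      rewrite !Hf by lia. unfold At.
      destruct (Hsg i ltac:(lia)) as [_ [Hi' _]]. destruct (Hsg j ltac:(lia)) as [_ [Hj' _]].
      apply (tower_pair G t _ _ Ht); try lia. apply Hsg_inj; lia.
  -
    replace (S (n - 1)) with n by lia.
    intros [t0 [Ht0 Hlen0]].
    destruct (top_index _ t0 Ht0 ltac:(lia)) as [k [Hk Htop]].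
    destruct (tower_mem _ t0 (nth k t0 dflt) Ht0 ltac:(apply nth_In; lia)) as [Hdh Hoh].
    set (h := snd (nth k t0 dflt)) in *.
    pose proof (derived_sub G h HG Hdh) as Hgh. pose proof (sg_PLo G h HG Hgh) as Ph.
    destruct (orbital_interval h _ Ph Hoh) as [c [d [Hc0 [Hcd [Hd1 [Hhc [Hhd HB]]]]]]].
    assert (Hmov : forall y, c < y < d -> h y <> y) by (intros y Hy; apply Hoh, HB; auto).
    assert (Hnf : exists f, G f /\ f c <> c).
    { apply NNPP; intros Hall.
      destruct (U1 G c h HG) as [e [He Hid]]; auto.
      { intros g Hg. apply NNPP; intros Hgc. apply Hall; exists g; auto. }
      { lra. }
      set (y := c + Rmin e (d - c) / 2).
      pose proof (Rmin_l e (d - c)). pose proof (Rmin_r e (d - c)).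
      assert (0 < Rmin e (d - c)) by (apply Rmin_glb_lt; lra).
      apply (Hmov y); [unfold y; lra|]. apply Hid; unfold y; lra. }
    destruct (lemL G h c d HG Hc0 Hcd Hd1 Hgh Hhd Hmov Hnf) as [p [B' [Hp [HoB' [HcB' Hin]]]]].
    apply Hno. exists ((B', p) :: t0). split; [|simpl; lia].
    apply (extend_top G t0 k p B'); auto.
    + apply (tower_mono (derived G)); auto. intros; apply derived_sub; auto.
    + intros y Hy. apply Hin. apply HB in Hy; auto.
    + intros Heq. apply Heq in HcB'. apply HB in HcB'. lra.
Qed.
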